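(* Let $S$ be an Arf numerical semigroup and let $a,R$ be positive integers. Then $\overline{S}=aS\cup\{m\in\mathbb{N}_0:\ m\ge R\}$ is an Arf semigroup.
   Context: A numerical semigroup is a submonoid $S$ of $(\mathbb{N}_0,+)$ with finite complement, with elements listed increasingly $\rho_1=0<\rho_2<\cdots$. $S$ is Arf if $\rho_i+\rho_j-\rho_k\in S$ for all positive integers $i\ge j\ge k$. $aS=\{as:\ s\in S\}$. *)

(* Defs.v *)
From Stdlib Require Import Arith Lia.

Definition numerical_semigroup (S : nat -> Prop) : Prop :=
  S 0 /\
  (forall x y, S x -> S y -> S (x + y)) /\
  (exists N, forall n, N <= n -> S n).

(* Arf: rho_i + rho_j - rho_k in S for all i >= j >= k, where rho is the
   increasing enumeration of S; equivalently for all elements x >= y >= z of S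
   (the enumeration is strictly increasing, so index order = value order). *)
Definition Arf (S : nat -> Prop) : Prop :=
  numerical_semigroup S /\
  (forall x y z, S x -> S y -> S z -> z <= y -> y <= x -> S (x + y - z)).

Definition scaled_closure (S : nat -> Prop) (a R : nat) : nat -> Prop :=
  fun m => (exists s, S s /\ m = a * s) \/ R <= m.

(* Main.v *)
Require Import Defs.
From Stdlib Require Import Arith Lia.

Theorem mainTheorem10 (S : nat -> Prop) (a R : nat) :
  Arf S -> 0 < a -> 0 < R -> Arf (scaled_closure S a R).
Proof.
  intros [[H0 [Hadd _]] Harf] Ha HR.
  unfold Arf, numerical_semigroup, scaled_closure.
  split; [split; [|split]|].
  - left. exists 0. split; [exact H0| lia].
  - intros x y [[s [Hs ->]]|Hx] [[t [Ht ->]]|Hy].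
    + left. exists (s + t). split; [apply Hadd; auto| lia].
    + right. lia.
    + right. lia.
    + right. lia.
  - exists R. intros n Hn. right. exact Hn.
  - intros x y z Hx Hy Hz Hzy Hyx.
    destruct (le_lt_dec R x) as [HRx|HRx]; [right; lia|].
    destruct Hx as [[s [Hs ->]]|Hx]; [|lia].
    destruct Hy as [[t [Ht ->]]|Hy]; [|lia].
    destruct Hz as [[u [Hu ->]]|Hz]; [|lia].
    assert (u <= t) by (apply (Nat.mul_le_mono_pos_l _ _ a); lia).
    assert (t <= s) by (apply (Nat.mul_le_mono_pos_l _ _ a); lia).
    left. exists (s + t - u). split; [apply Harf; auto| nia].
Qed.
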